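(* For any rooted tree $t=B_+(t_1\cdots t_n)$ and any integer $s\ge0$, $$C_s(t)=\sum_{j=0}^{s}\ \sum_{\substack{r_1+\cdots+r_n=s-j\\ r_1,\ldots,r_n\ge0}}\mathrm{qsh}\big(|t_1|-r_1,\ldots,|t_n|-r_n;\,j\big)\,C_{r_1}(t_1)\cdots C_{r_n}(t_n),$$ where terms with some $r_i\ge|t_i|$ vanish since then $C_{r_i}(t_i)=0$. In particular $C_0(t)=\frac{|t|!}{t!}$, and for the generalized corolla $\mathcal C_{k_1,\ldots,k_n}=B_+(E_{k_1}\cdots E_{k_n})$ one has $C_s(\mathcal C_{k_1,\ldots,k_n})=\mathrm{qsh}(k_1,\ldots,k_n;s)$.
   Context: Let $k$ be a field of characteristic $0$. Rooted trees are finite, non-planar; $|t|$ is the number of vertices of $t$; $B_+(t_1\cdots t_n)$ joins the roots of $t_1,\dots,t_n$ to a new root. The tree factorial: $\bullet!=1$ for the one-vertex tree, $B_+(t_1\cdots t_n)!=|B_+(t_1\cdots t_n)|\prod_jt_j!$. $E_j$ denotes the ladder with $j$ vertices (a chain rooted at an end). $\mathcal H_{CK}$ is the free commutative algebra on nonempty rooted trees; $\mathcal A=k[x]$ carries the quasi-shuffle product $\diamond$ determined by $\mathbf 1\diamond u=u\diamond\mathbf 1=u$ and $x^k\diamond x^l=(x^{k-1}\diamond x^l)x+(x^k\diamond x^{l-1})x+(x^{k-1}\diamond x^{l-1})x$ ($k,l\ge1$). $\Lambda:\mathcal H_{CK}\to\mathcal A$ is the unique unital algebra morphism with $\Lambda(B_+(t_1\cdots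 t_n))=(\Lambda(t_1)\diamond\cdots\diamond\Lambda(t_n))x$. For a nonempty tree $t$, $C_s(t)$ denotes the coefficient of $x^{|t|-s}$ in $\Lambda(t)$ (zero if $|t|-s\le0$ or $s<0$). For nonnegative integers $k_1,\ldots,k_n$ with $K=k_1+\cdots+k_n$ and $r\ge0$, $\mathrm{qsh}(k_1,\ldots,k_n;r)$ is the number of surjective maps $\pi:\{1,\ldots,K\}\to\{1,\ldots,K-r\}$ that are strictly increasing on each block $\{k_1+\cdots+k_j+1,\ldots,k_1+\cdots+k_{j+1}\}$, $j=0,\ldots,n-1$ (equivalently, the coefficient of $x^{K-r}$ in $x^{k_1}\diamond\cdots\diamond x^{k_n}$). *)

(* Defs.v *)
From HB Require Import structures.
From mathcomp Require Import all_boot all_order all_algebra.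
Set Implicit Arguments. Unset Strict Implicit. Unset Printing Implicit Defensive.
Import GRing.Theory.
Local Open Scope ring_scope.

(* Rooted trees: a tree is B_+ of a (finite) list of subtrees.  Trees are
   non-planar in the paper; all notions below are invariant under reordering
   of children, so the planar representation is harmless. *)
Inductive tree : Type := Node of seq tree.

Fixpoint tr_size (t : tree) : nat :=
  let: Node ts := t in (sumn (map tr_size ts)).+1.

Fixpoint tfact (t : tree) : nat :=
  let: Node ts := t in (sumn (map tr_size ts)).+1 * foldr muln 1%N (map tfact ts).

(* ladder E_k with k vertices (k >= 1); ladder 0 is junk = ladder 1 *)
Definition ladder (k : nat) : tree := iter k.-1 (fun t => Node [:: t]) (Node [::]).

Section QSh.
Variable F : fieldType.

Fixpoint qsh_mon (k l : nat) {struct k} : {poly F} :=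
  match k with
  | 0 => 'X^l
  | k'.+1 =>
      let fix qm' (l : nat) : {poly F} :=
        match l with
        | 0 => 'X^(k'.+1)
        | l'.+1 => (qsh_mon k' l + qm' l' + qsh_mon k' l') * 'X
        end in qm' l
  end.

Definition diamond (p q : {poly F}) : {poly F} :=
  \sum_(i < size p) \sum_(j < size q) (p`_i * q`_j) *: qsh_mon i j.

Fixpoint Lambda (t : tree) : {poly F} :=
  let: Node ts := t in (foldr diamond 1 (map Lambda ts)) * 'X.

Definition Ccoef (s : nat) (t : tree) : F :=
  if (s < tr_size t)%N then (Lambda t)`_(tr_size t - s) else 0.
End QSh.

(* qsh(k_1,...,k_n; r): number of surjections {1..K} -> {1..K-r} strictly
   increasing on each block; 0 when r > K (no such codomain). *)
Definition same_block (ks : seq nat) (p q : nat) : bool :=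
  [exists j : 'I_(size ks),
     [&& (sumn (take j ks) <= p)%N, (p < sumn (take j.+1 ks))%N,
         (sumn (take j ks) <= q)%N & (q < sumn (take j.+1 ks))%N]].

Definition qsh (ks : seq nat) (r : nat) : nat :=
  let K := sumn ks in
  if (r <= K)%N then
    #|[set f : {ffun 'I_K -> 'I_(K - r)} |
        [forall y, y \in codom f] &&
        [forall p : 'I_K, forall q : 'I_K,
           ((p < q)%N && same_block ks p q) ==> (f p < f q)%N]]|
  else 0%N.

(* Main.v *)
Require Import Defs.
From HB Require Import structures.
From mathcomp Require Import all_boot all_order all_algebra.
From Stdlib Require Import Lia.
Import GRing.Theory.
Set Implicit Arguments. Unset Strict Implicit. Unset Printing Implicit Defensive.

Lemma sb_consl k ks p q : p < k -> q < k -> same_block (k :: ks) p q.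
Proof.
move=> hp hq; apply/existsP; exists ord0 => /=.
by rewrite take0 addn0 hp hq.
Qed.

Lemma sb_conslr k ks p q : p < k -> k <= q -> same_block (k :: ks) p q = false.
Proof.
move=> hp hq; apply/negbTE/existsP => -[[[|j] hj]] /=.
  by rewrite take0 addn0 => /andP[_]; rewrite ltnNge hq.
by rewrite leqNgt (leq_trans hp (leq_addr _ _)).
Qed.

Lemma sb_consr k ks a b :
  same_block (k :: ks) (k + a) (k + b) = same_block ks a b.
Proof.
apply/existsP/existsP => -[[j hj]] /=.
  case: j hj => [|j] hj /=.
    by rewrite take0 addn0 ltnNge leq_addr.
  move=> H; exists (Ordinal (hj : j < size ks)) => /=.
  by rewrite !leq_add2l !ltn_add2l in H.
move=> H; exists (Ordinal (hj : j.+1 < (size ks).+1)) => /=.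
by rewrite !leq_add2l !ltn_add2l.
Qed.

Definition sinc k N (g : {ffun 'I_k -> 'I_N}) :=
  [forall p : 'I_k, forall q : 'I_k, (p < q) ==> (g p < g q)].

Lemma sorted_tupleP k N (t : k.-tuple 'I_N) :
  sorted ltn (map val t) = [forall p : 'I_k, forall q : 'I_k, (p < q) ==> (tnth t p < tnth t q)].
Proof.
have E (i : 'I_k) : nth 0 (map val t) i = tnth t i.
  by rewrite (nth_map (tnth t i)) ?size_tuple // -tnth_nth.
apply/idP/forallP => [H p | H].
  apply/forallP => q; apply/implyP => pq.
  rewrite -!E; apply: (sorted_ltn_nth ltn_trans) => //; rewrite inE size_map size_tuple.
    exact: ltn_ord.
  exact: ltn_ord.
apply/(sortedP 0) => i; rewrite size_map size_tuple => hi.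
have hi' : i < k by apply: ltnW.
move: (H (Ordinal hi')) => /forallP /(_ (Ordinal hi)) /implyP /=.
by rewrite -!E /=; apply.
Qed.

Lemma card_sinc k N : #|[set g : {ffun 'I_k -> 'I_N} | sinc g]| = 'C(N, k).
Proof.
rewrite -card_ltn_sorted_tuples.
pose mt (g : {ffun 'I_k -> 'I_N}) := mktuple (fun i => g i).
have mt_inj : injective mt.
  move=> g1 g2 e; apply/ffunP => i.
  by rewrite -(tnth_mktuple g1) -(tnth_mktuple g2) -/(mt _) e.
rewrite -(card_imset _ mt_inj); apply: eq_card => t.
rewrite inE sorted_tupleP.
apply/imsetP/idP => [[g] | H].
  rewrite inE => /forallP H -> ; apply/forallP => p; apply/forallP => q; rewrite !tnth_mktuple.
  by move: (H p) => /forallP /(_ q).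
exists [ffun i => tnth t i].
  rewrite inE; apply/forallP => p; apply/forallP => q; rewrite !ffunE.
  by move/forallP: H => /(_ p) /forallP /(_ q).
by apply: eq_from_tnth => i; rewrite tnth_mktuple ffunE.
Qed.
Definition binc ks N (f : {ffun 'I_(sumn ks) -> 'I_N}) : bool :=
  [forall p : 'I_(sumn ks), forall q : 'I_(sumn ks),
     ((p < q)%N && same_block ks p q) ==> (f p < f q)%N].

Definition Binc ks N := [set f : {ffun 'I_(sumn ks) -> 'I_N} | binc f].

Lemma card_Binc_nil N : #|Binc [::] N| = 1.
Proof.
rewrite (_ : 1 = #|{ffun 'I_0 -> 'I_N}|); last by rewrite card_ffun !card_ord.
by apply: eq_card => f; rewrite !inE; apply/forallP => -[].
Qed.

Lemma card_Binc_cons k ks N : #|Binc (k :: ks) N| = 'C(N, k) * #|Binc ks N|.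
Proof.
pose L := sumn ks.
pose sp (f : {ffun 'I_(k + L) -> 'I_N}) :=
  ([ffun i => f (lshift L i)], [ffun i => f (rshift k i)]).
have sp_inj : injective sp.
  move=> f1 f2 [e1 e2]; apply/ffunP => p.
  case: (splitP p) => [i hi | j hj].
    have -> : p = lshift L i by apply: val_inj.
    by move/ffunP: e1 => /(_ i); rewrite !ffunE.
  have -> : p = rshift k j by apply: val_inj.
  by move/ffunP: e2 => /(_ j); rewrite !ffunE.
rewrite -card_sinc -cardsX -(card_imset _ sp_inj).
apply: eq_card => -[g h]; rewrite inE.
apply/imsetP/andP => [[f] | [Hg Hh]].
  move=> /[!inE]; rewrite {1}/binc => /forallP Hf [-> ->]; split.
    apply/forallP => p; apply/forallP => q; apply/implyP => pq.
    rewrite !ffunE; move: (Hf (lshift L p)) => /forallP /(_ (lshift L q)) /implyP; apply.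
    by rewrite /= pq sb_consl.
  rewrite /binc; apply/forallP => p; apply/forallP => q; apply/implyP => /andP [pq spq].
  rewrite !ffunE; move: (Hf (rshift k p)) => /forallP /(_ (rshift k q)) /implyP; apply.
  by rewrite /= ltn_add2l pq sb_consr.
exists [ffun p => match split p with inl i => g i | inr j => h j end].
  rewrite inE; apply/forallP => p; apply/forallP => q; apply/implyP => /andP [pq spq].
  rewrite !ffunE.
  case: (splitP p) => [i hi | i hi]; case: (splitP q) => [j hj | j hj].
  - rewrite inE /sinc in Hg; move: (Hg) => /forallP /(_ i) /forallP /(_ j) /implyP; apply.
    by rewrite -hi -hj.
  - by rewrite hi hj sb_conslr ?leq_addr ?andbF // -hi ltn_ord in spq.
  - by move: pq; rewrite hi hj ltnNge (leq_trans (ltnW (ltn_ord j)) (leq_addr _ _)).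
  - rewrite inE /binc in Hh; move: (Hh) => /forallP /(_ i) /forallP /(_ j) /implyP; apply.
    by rewrite hi hj ltn_add2l sb_consr in pq spq *; rewrite pq spq.
congr pair; apply/ffunP => i; rewrite !ffunE.
  by rewrite (unsplitK (inl i) : split (lshift L i) = inl i).
by rewrite (unsplitK (inr i) : split (rshift k i) = inr i).
Qed.

Lemma card_Binc ks N : #|Binc ks N| = \prod_(k <- ks) 'C(N, k).
Proof.
elim: ks => [|k ks IH]; first by rewrite big_nil card_Binc_nil.
by rewrite big_cons card_Binc_cons IH.
Qed.

Definition Surj ks N := [set f : {ffun 'I_(sumn ks) -> 'I_N} | [forall z, z \in codom f] && binc f].

Lemma enum_val_ltn y (U : {set 'I_y}) (i j : 'I_#|U|) :
  (i < j)%N -> (enum_val i < enum_val j)%N.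
Proof.
have inc_A : sorted ltn (map val (enum U)).
  rewrite -[enum _](eq_filter (mem_enum _)).
  rewrite -(eq_filter (mem_map val_inj _)) -filter_map.
  by rewrite (sorted_filter ltn_trans) // unlock val_ord_enum iota_ltn_sorted.
move=> ij.
rewrite (enum_val_nth (enum_val i) i) (enum_val_nth (enum_val i) j).
have hi : (i < size (enum U))%N by rewrite -cardE ltn_ord.
have hj : (j < size (enum U))%N by rewrite -cardE ltn_ord.
rewrite -!(nth_map (enum_val i) 0) //.
by apply: (sorted_ltn_nth ltn_trans) => //; rewrite inE size_map.
Qed.

Lemma enum_val_ltnE y (U : {set 'I_y}) (i j : 'I_#|U|) :
  (enum_val i < enum_val j)%N = (i < j)%N.
Proof.
apply/idP/idP; last exact: enum_val_ltn.
case: (ltngtP i j) => // [ji | /val_inj ->]; last by rewrite ltnn.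
by move/(ltn_trans (enum_val_ltn ji)); rewrite ltnn.
Qed.

Lemma card_fiber ks y (U : {set 'I_y}) :
  #|[set f in Binc ks y | f @: [set: 'I_(sumn ks)] == U]| = #|Surj ks #|U| |.
Proof.
pose phi (g : {ffun 'I_(sumn ks) -> 'I_#|U|}) :=
  [ffun p => enum_val (g p)] : {ffun 'I_(sumn ks) -> 'I_y}.
have phi_inj : injective phi.
  move=> g1 g2 e; apply/ffunP => p; apply: enum_val_inj.
  by move/ffunP: e => /(_ p); rewrite !ffunE.
rewrite -(card_imset _ phi_inj); apply: eq_card => f.
rewrite inE; apply/andP/imsetP => [[Bf /eqP imf] | [g]].
  have fU : forall p, f p \in U by move=> p; rewrite -imf imset_f.
  pose g := [ffun p => enum_rank_in (fU p) (f p)].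
  have gE p : enum_val (g p) = f p by rewrite ffunE enum_rankK_in.
  exists g; last by apply/ffunP => p; rewrite ffunE gE.
  rewrite inE; apply/andP; split.
    apply/forallP => z.
    have : enum_val z \in f @: [set: 'I_(sumn ks)] by rewrite imf enum_valP.
    case/imsetP => p _ ez.
    have -> : z = g p by apply: enum_val_inj; rewrite gE.
    exact: codom_f.
  rewrite inE /binc in Bf.
  apply/forallP => p; apply/forallP => q; apply/implyP => H.
  rewrite -enum_val_ltnE !gE.
  by move/forallP: Bf => /(_ p) /forallP /(_ q) /implyP; apply.
rewrite inE => /andP [/forallP Sg Bg] ->; split.
  rewrite inE; apply/forallP => p; apply/forallP => q; apply/implyP => H.
  rewrite !ffunE enum_val_ltnE.
  by move: Bg; rewrite /binc => /forallP /(_ p) /forallP /(_ q) /implyP; apply.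
apply/eqP/setP => x; apply/imsetP/idP => [[p _ ->] | xU].
  by rewrite ffunE enum_valP.
have /codomP [p ep] := Sg (enum_rank_in xU x).
by exists p => //; rewrite ffunE -ep enum_rankK_in.
Qed.

Lemma card_Binc_Surj ks y :
  #|Binc ks y| = \sum_(N < y.+1) 'C(y, N) * #|Surj ks N|.
Proof.
rewrite -sum1_card (partition_big (fun f : {ffun 'I_(sumn ks) -> 'I_y} => f @: [set: 'I_(sumn ks)]) predT) //=.
rewrite (eq_bigr (fun U : {set 'I_y} => #|Surj ks #|U| |)); last first.
  move=> U _; rewrite -card_fiber sum1_card; apply: eq_card => f.
  by rewrite [RHS]inE.
rewrite (partition_big (fun U : {set 'I_y} => (inord #|U| : 'I_y.+1)) (predT : pred 'I_y.+1)) //=.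
apply: eq_bigr => N _.
rewrite (eq_bigr (fun _ => #|Surj ks N|)); last first.
  move=> U /eqP <-; rewrite inordK //; rewrite ltnS -[X in (_ <= X)%N](card_ord y).
  exact: max_card.
rewrite sum_nat_const; congr (_ * _).
rewrite -[X in 'C(X, _)](card_ord y) -card_draws; apply: eq_card => U.
have hU : (#|U| < y.+1)%N.
  by rewrite ltnS -[X in (_ <= X)%N](card_ord y); exact: max_card.
rewrite inE unfold_in /= inordK //.
Qed.

Lemma card_Surj_big ks N : (sumn ks < N)%N -> #|Surj ks N| = 0.
Proof.
move=> hN; apply: eq_card0 => f; rewrite inE.
apply/negbTE/negP => /andP [/forallP H _].
have : (#|'I_N| <= size (codom f))%N.
  apply: (leq_trans _ (card_size _)); apply: subset_leq_card.
  by apply/subsetP => z _; exact: H.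
by rewrite card_ord size_codom card_ord leqNgt hN.
Qed.

Lemma key_identity ks y :
  \sum_(N < y.+1) 'C(y, N) * #|Surj ks N| = \prod_(k <- ks) 'C(y, k).
Proof. by rewrite -card_Binc_Surj card_Binc. Qed.

Lemma sum_widen_nat (a b : nat) (G : nat -> nat) : a <= b ->
  (forall i, a <= i -> i < b -> G i = 0) ->
  \sum_(i < a) G i = \sum_(i < b) G i.
Proof.
move=> ab H; rewrite (big_ord_widen b G) // big_mkcond; apply: eq_bigr => i _.
by case: ifP => // /negbT; rewrite -leqNgt => h; rewrite H.
Qed.

Lemma key_identity_big ks y :
  \sum_(N < (sumn ks).+1) 'C(y, N) * #|Surj ks N| = \prod_(k <- ks) 'C(y, k).
Proof.
rewrite -key_identity.
transitivity (\sum_(i < sumn ks + y.+1) 'C(y, i) * #|Surj ks i|).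
  apply: (@sum_widen_nat _ _ (fun i => 'C(y, i) * #|Surj ks i|)); first by rewrite addnS ltnS leq_addr.
  by move=> i hi _; rewrite card_Surj_big ?muln0.
symmetry; apply: (@sum_widen_nat _ _ (fun i => 'C(y, i) * #|Surj ks i|)); first by rewrite leq_addl.
by move=> i hi _; rewrite bin_small.
Qed.

Lemma qshE ks r : qsh ks r = if r <= sumn ks then #|Surj ks (sumn ks - r)| else 0.
Proof. by []. Qed.

Lemma ar1 K S s : S <= K -> S <= s -> K < s -> (s - S <= K - S) = false.
Proof. move=> /leP h1 /leP h2 /ltP h3; apply/negbTE/negP => /leP; rewrite -!minusE; lia. Qed.
Lemma ar2 K S s : S <= K -> S <= s -> s <= K -> s - S <= K - S.
Proof. move=> /leP h1 /leP h2 /leP h3; apply/leP; rewrite -!minusE; lia. Qed.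
Lemma ar3 K S s : S <= K -> S <= s -> s <= K -> (K - S) - (s - S) = K - s.
Proof. move=> /leP h1 /leP h2 /leP h3; rewrite -!minusE; lia. Qed.
Lemma ar4 K S s : S <= K -> s < S -> K - S < K - s.
Proof. move=> /leP h1 /ltP h2; apply/ltP; rewrite -!minusE; lia. Qed.
Lemma ar5 s S j : j <= s -> S <= s -> (S == s - j) = (j == s - S).
Proof. move=> /leP h1 /leP h2; apply/eqP/eqP; rewrite -!minusE; lia. Qed.
Lemma ar6 s S j : j <= s -> s < S -> (S == s - j) = false.
Proof. move=> /leP h1 /ltP h2; apply/negbTE/eqP; rewrite -!minusE; lia. Qed.

Local Open Scope ring_scope.

Section Ey.
Variable F : fieldType.
Implicit Types p q : {poly F}.

Definition Ey (y : nat) p : F := \sum_(i < size p) p`_i * ('C(y, i))%:R.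

Lemma sum_widen (a b : nat) (G : nat -> F) : (a <= b)%N ->
  (forall i, (a <= i)%N -> (i < b)%N -> G i = 0) ->
  \sum_(i < a) G i = \sum_(i < b) G i.
Proof.
move=> ab H; rewrite (big_ord_widen b G) // big_mkcond; apply: eq_bigr => i _.
by case: ifP => // /negbT; rewrite -leqNgt => h; rewrite H.
Qed.

Lemma EyE y p M : (size p <= M)%N -> Ey y p = \sum_(i < M) p`_i * ('C(y, i))%:R.
Proof.
move=> hM; rewrite /Ey; apply: (sum_widen (G := fun i : nat => p`_i * ('C(y, i))%:R)) => // i hi _.
by rewrite nth_default // mul0r.
Qed.

Lemma Ey0 y : Ey y 0 = 0.
Proof. by rewrite /Ey size_poly0 big_ord0. Qed.

Lemma EyD y p q : Ey y (p + q) = Ey y p + Ey y q.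
Proof.
pose M := maxn (size p) (size q).
have hpq : (size (p + q)%R <= M)%N by exact: size_add.
rewrite (EyE y hpq) (EyE y (leq_maxl (size p) (size q))) (EyE y (leq_maxr (size p) (size q))).
by rewrite -big_split; apply: eq_bigr => i _; rewrite coefD mulrDl.
Qed.

Lemma EyZ y c p : Ey y (c *: p) = c * Ey y p.
Proof.
rewrite (EyE y (size_scale_leq c p)) /Ey mulr_sumr.
by apply: eq_bigr => i _; rewrite coefZ mulrA.
Qed.

Lemma EyN y p : Ey y (- p) = - Ey y p.
Proof. by rewrite -scaleN1r EyZ mulN1r. Qed.

Lemma Ey_sum y (I : Type) (r : seq I) (P : pred I) (G : I -> {poly F}) :
  Ey y (\sum_(i <- r | P i) G i) = \sum_(i <- r | P i) Ey y (G i).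
Proof. exact: (big_morph (Ey y) (EyD y) (Ey0 y)). Qed.

Lemma EyXn y l : Ey y 'X^l = ('C(y, l))%:R.
Proof.
rewrite /Ey size_polyXn big_ord_recr /= coefXn eqxx mul1r big1 ?add0r // => i _.
rewrite coefXn; have /negbTE -> : (i : nat) != l by rewrite neq_ltn ltn_ord.
by rewrite mul0r.
Qed.

Lemma Ey1 y : Ey y 1 = 1.
Proof. by rewrite -(expr0 'X) EyXn bin0. Qed.

Lemma size_mulX_leq p : (size (p * 'X)%R <= (size p).+1)%N.
Proof.
have [-> | p0] := eqVneq p 0; first by rewrite mul0r size_poly0.
by rewrite size_mulX.
Qed.


Lemma EyMX_shift y p : Ey y (p * 'X) = \sum_(i < size p) p`_i * ('C(y, i.+1))%:R.
Proof.
rewrite (EyE y (size_mulX_leq p)) big_ord_recl coefMX /= mul0r add0r.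
by apply: eq_bigr => i _; rewrite coefMX.
Qed.

Lemma EyMX y p : Ey y.+1 (p * 'X) = Ey y p + Ey y (p * 'X).
Proof.
rewrite !EyMX_shift /Ey -big_split; apply: eq_bigr => i _.
by rewrite binS natrD mulrDr addrC.
Qed.

Lemma Ey_at0 p : Ey 0 p = p`_0.
Proof.
have [-> | p0] := eqVneq p 0; first by rewrite Ey0 coef0.
rewrite /Ey; case E: (size p) => [|n]; first by move/eqP: E; rewrite size_poly_eq0 (negbTE p0).
rewrite big_ord_recl bin0 mulr1 big1 ?addr0 // => i _.
by rewrite bin0n mulr0.
Qed.

Lemma qsh_monSS k l : qsh_mon F k.+1 l.+1 =
  (qsh_mon F k l.+1 + qsh_mon F k.+1 l + qsh_mon F k l) * 'X.
Proof. by []. Qed.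

Lemma qsh_monS0 k : qsh_mon F k 0 = 'X^k.
Proof. by case: k. Qed.

Lemma qsh_mon0 l : qsh_mon F 0 l = 'X^l.
Proof. by []. Qed.

Lemma Ey_qsh y i j : Ey y (qsh_mon F i j) = ('C(y, i))%:R * ('C(y, j))%:R.
Proof.
elim: i j y => [|i IHi] j y; first by rewrite qsh_mon0 EyXn bin0 mul1r.
elim: j y => [|j IHj] y; first by rewrite qsh_monS0 EyXn bin0 mulr1.
rewrite qsh_monSS; elim: y => [|y IHy].
  by rewrite Ey_at0 coefMX /= !bin0n mul0r.
rewrite EyMX IHy !EyD IHi IHj IHi !binS !natrD.
set a1 := ('C(y, i.+1))%:R; set a0 := ('C(y, i))%:R.
set b1 := ('C(y, j.+1))%:R; set b0 := ('C(y, j))%:R.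
rewrite mulrDl !mulrDr.
by rewrite [LHS]addrC !addrA (addrAC (a1 * b1)).
Qed.

Lemma Ey_diamond y p q : Ey y (diamond p q) = Ey y p * Ey y q.
Proof.
rewrite /diamond Ey_sum.
under eq_bigr => i _ do (rewrite Ey_sum; under eq_bigr => j _ do rewrite EyZ Ey_qsh).
rewrite /Ey big_distrl /=; apply: eq_bigr => i _.
rewrite big_distrr /=; apply: eq_bigr => j _.
by rewrite mulrACA.
Qed.

Lemma Ey_inj p q : (forall y, Ey y p = Ey y q) -> p = q.
Proof.
move=> H; apply/eqP; rewrite -subr_eq0; apply/eqP.
set r := p - q.
have Hr y : Ey y r = 0 by rewrite /r EyD EyN H subrr.
apply/polyP => n; rewrite coef0.
elim/ltn_ind: n => n IH.
have := Hr n; rewrite (@EyE n r (size r + n.+1)) ?leq_addr //.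
rewrite -(subnKC (leq_addl (size r) n.+1)) big_split_ord /= [X in _ + X]big1 ?addr0; last first.
  by move=> i _; rewrite bin_small ?mulr0 // leq_addr.
rewrite big_ord_recr /= big1 ?add0r ?binn ?mulr1 // => i _.
by rewrite IH ?mul0r.
Qed.

Definition Pm (ks : seq nat) : {poly F} := foldr (@diamond F) 1 (map (fun k => 'X^k) ks).

Lemma Ey_Pm y ks : Ey y (Pm ks) = \prod_(k <- ks) ('C(y, k))%:R.
Proof.
elim: ks => [|k ks IH]; first by rewrite big_nil /Pm /= Ey1.
by rewrite big_cons /Pm /= Ey_diamond EyXn -IH.
Qed.

End Ey.

Lemma Pm_coef (F : fieldType) ks N : (Pm F ks)`_N = (#|Surj ks N|)%:R.
Proof.
have -> : Pm F ks = \poly_(N < (sumn ks).+1) (#|Surj ks N|)%:R.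
  apply: Ey_inj => y; rewrite Ey_Pm (EyE y (size_poly _ _)).
  rewrite -natr_prod -(key_identity_big ks y) natr_sum; apply: eq_bigr => i _.
  by rewrite coef_poly ltn_ord natrM mulrC.
rewrite coef_poly; case: ifP => // /negbT; rewrite -leqNgt => h.
by rewrite card_Surj_big.
Qed.

Section Trees.
Variable F : fieldType.
Implicit Types p q : {poly F}.
Local Notation nd := (Node [::]).

Lemma size_qsh i j : (size (qsh_mon F i j) <= (i + j).+1)%N.
Proof.
elim: i j => [|i IHi] j; first by rewrite qsh_mon0 size_polyXn.
elim: j => [|j IHj]; first by rewrite qsh_monS0 size_polyXn addn0.
rewrite qsh_monSS; apply: (leq_trans (size_mulX_leq _)); rewrite ltnS.
apply: (leq_trans (size_add _ _)); rewrite geq_max; apply/andP; split.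
  apply: (leq_trans (size_add _ _)); rewrite geq_max; apply/andP; split.
    by apply: (leq_trans (IHi _)); rewrite addSn.
  by apply: (leq_trans IHj); rewrite addnS.
by apply: (leq_trans (IHi _)); rewrite addSn addnS ltnS leqW.
Qed.

Lemma size_diamond p q a b : (size p <= a.+1)%N -> (size q <= b.+1)%N ->
  (size (diamond p q) <= (a + b).+1)%N.
Proof.
move=> hp hq; rewrite /diamond.
apply: (big_ind (fun r : {poly F} => size r <= (a + b).+1)%N) => [|x y hx hy|i _].
- by rewrite size_poly0.
- by apply: (leq_trans (size_add _ _)); rewrite geq_max hx hy.
apply: (big_ind (fun r : {poly F} => size r <= (a + b).+1)%N) => [|x y hx hy|j _].
- by rewrite size_poly0.
- by apply: (leq_trans (size_add _ _)); rewrite geq_max hx hy.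
apply: (leq_trans (size_scale_leq _ _)); apply: (leq_trans (size_qsh _ _)).
rewrite ltnS leq_add //.
  by rewrite -ltnS (leq_trans (ltn_ord i)).
by rewrite -ltnS (leq_trans (ltn_ord j)).
Qed.

Lemma LambdaE ts : Lambda F (Node ts) = foldr (@diamond F) 1 (map (Lambda F) ts) * 'X.
Proof. by []. Qed.

Lemma tr_sizeE ts : tr_size (Node ts) = (sumn (map tr_size ts)).+1.
Proof. by []. Qed.

Lemma nth_size_le ts i : (i < size ts)%N -> (tr_size (nth nd ts i) <= sumn (map tr_size ts))%N.
Proof.
elim: ts i => [|t ts IH] [|i] //= hi; first by rewrite leq_addr.
by apply: (leq_trans (IH _ hi)); rewrite leq_addl.
Qed.

Lemma tree_ind2 (P : tree -> Prop) :
  (forall ts, (forall i, (i < size ts)%N -> P (nth nd ts i)) -> P (Node ts)) ->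
  forall t, P t.
Proof.
move=> H t; move: {2}(tr_size t) (leqnn (tr_size t)) => n.
elim: n t => [|n IH] [ts] //= hs.
apply: H => i hi; apply: IH.
by apply: (leq_trans (nth_size_le hi)); rewrite -ltnS.
Qed.

Lemma size_foldr ts :
  (forall i, (i < size ts)%N -> (size (Lambda F (nth nd ts i)) <= (tr_size (nth nd ts i)).+1)%N) ->
  (size (foldr (@diamond F) 1%R (map (Lambda F) ts)) <= (sumn (map tr_size ts)).+1)%N.
Proof.
elim: ts => [|t ts IH] H /=; first by rewrite size_poly1.
apply: size_diamond; first exact: (H 0%N).
by apply: IH => i hi; apply: (H i.+1).
Qed.

Lemma Lambda_size t : (size (Lambda F t) <= (tr_size t).+1)%N.
Proof.
elim/tree_ind2: t => ts IH.
rewrite LambdaE; apply: (leq_trans (size_mulX_leq _)).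
by rewrite tr_sizeE ltnS; apply: size_foldr.
Qed.

Lemma Lambda_coef0 t : (Lambda F t)`_0 = 0.
Proof. by case: t => ts; rewrite LambdaE coefMX. Qed.

Lemma Ey_foldr y (s : seq tree) :
  Ey y (foldr (@diamond F) 1 (map (Lambda F) s)) = \prod_(t <- s) Ey y (Lambda F t).
Proof.
elim: s => [|t s IH] /=; first by rewrite big_nil Ey1.
by rewrite big_cons Ey_diamond IH.
Qed.

Lemma Ey_Lambda y t B : (tr_size t <= B)%N ->
  Ey y (Lambda F t) = \sum_(r < B) Ccoef F r t * ('C(y, tr_size t - r))%:R.
Proof.
move=> hB; set T := tr_size t.
rewrite (EyE y (Lambda_size t)) -(big_mkord xpredT (fun i => (Lambda F t)`_i * ('C(y, i))%:R)).
rewrite big_rev_mkord subn0 big_ord_recr /= subnn Lambda_coef0 mul0r addr0.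
transitivity (\sum_(i < T) Ccoef F i t * ('C(y, T - i))%:R).
  apply: eq_bigr => i _; rewrite /Ccoef -/T ltn_ord subSS //.
apply: (sum_widen (G := fun i : nat => Ccoef F i t * ('C(y, T - i))%:R)) => // i hi _.
by rewrite /Ccoef -/T ltnNge hi mul0r.
Qed.

Definition kr (ts : seq tree) (B : nat) (r : {ffun 'I_(size ts) -> 'I_B}) : seq nat :=
  map (fun i : 'I_(size ts) => (tr_size (nth nd ts i) - r i)%N) (enum 'I_(size ts)).

Lemma D_expand ts B : (forall i, (i < size ts)%N -> (tr_size (nth nd ts i) <= B)%N) ->
  foldr (@diamond F) 1 (map (Lambda F) ts) =
  \sum_(r : {ffun 'I_(size ts) -> 'I_B})
     (\prod_(i < size ts) Ccoef F (r i) (nth nd ts i)) *: Pm F (kr r).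
Proof.
move=> hB; apply: Ey_inj => y; rewrite Ey_foldr Ey_sum.
rewrite (big_nth nd) big_mkord.
rewrite (eq_bigr (fun i : 'I_(size ts) => \sum_(r < B) Ccoef F r (nth nd ts i) *
           ('C(y, tr_size (nth nd ts i) - r))%:R)); last first.
  by move=> i _; apply: Ey_Lambda; apply: hB.
rewrite bigA_distr_bigA; apply: eq_bigr => r _.
rewrite EyZ Ey_Pm /kr big_map big_enum /= -big_split /=.
by [].
Qed.

Lemma diamond1 p : diamond p 1 = p.
Proof.
rewrite /diamond size_poly1.
transitivity (\sum_(i < size p) p`_i *: 'X^i); last by rewrite -poly_def coefK.
by apply: eq_bigr => i _; rewrite big_ord1 coef1 /= mulr1 qsh_monS0.
Qed.

Lemma ladderS k : ladder k.+2 = Node [:: ladder k.+1].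
Proof. by []. Qed.

Lemma Lambda_ladder k : (0 < k)%N -> Lambda F (ladder k) = 'X^k.
Proof.
elim: k => [|k IH] // _; case: k IH => [|k] IH; first by rewrite /= mul1r expr1.
by rewrite ladderS LambdaE /= diamond1 IH // -exprSr.
Qed.

Lemma tr_size_ladder k : (0 < k)%N -> tr_size (ladder k) = k.
Proof.
elim: k => [|k IH] // _; case: k IH => [|k] IH //.
by rewrite ladderS tr_sizeE /= addn0 IH.
Qed.

Lemma part3 ks s : all (fun k => 0 < k)%N ks ->
  Ccoef F s (Node (map ladder ks)) = (qsh ks s)%:R.
Proof.
move=> hks.
have HL : map (Lambda F) (map ladder ks) = map (fun k => 'X^k) ks.
  by elim: ks hks => //= k ks IH /andP [hk hks]; rewrite Lambda_ladder // IH.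
have HS : sumn (map tr_size (map ladder ks)) = sumn ks.
  by clear HL; elim: ks hks => //= k ks IH /andP [hk hks]; rewrite tr_size_ladder // IH.
rewrite /Ccoef tr_sizeE LambdaE HL HS qshE -/(Pm F ks) ltnS.
case: (leqP s (sumn ks)) => hs //.
by rewrite subSn // coefMX /= Pm_coef.
Qed.

Lemma coef_qsh_small i j n : (i + j < n)%N -> (qsh_mon F i j)`_n = 0.
Proof. by move=> h; rewrite nth_default // (leq_trans (size_qsh i j)). Qed.

Lemma qsh_top i j : (qsh_mon F i j)`_(i + j) = ('C(i + j, i))%:R.
Proof.
elim: i j => [|i IHi] j; first by rewrite qsh_mon0 coefXn eqxx bin0.
elim: j => [|j IHj]; first by rewrite qsh_monS0 addn0 coefXn eqxx binn.
rewrite qsh_monSS addSn coefMX /= !coefD IHi.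
have E2 : (i + j.+1 = i.+1 + j)%N by rewrite addSn addnS.
rewrite [in X in _ + X + _]E2 IHj coef_qsh_small ?addr0 ?addnS //.
by rewrite -E2 addnS [in RHS]binS natrD addrC.
Qed.

Lemma diamond_top p q a b : (size p <= a.+1)%N -> (size q <= b.+1)%N ->
  (diamond p q)`_(a + b) = p`_a * q`_b * ('C(a + b, a))%:R.
Proof.
move=> hp hq; rewrite /diamond coef_sum.
rewrite (@sum_widen _ (size p) a.+1
  (fun i => (\sum_(j < size q) (p`_i * q`_j) *: qsh_mon F i j)`_(a + b))) //; last first.
  move=> i hi _; rewrite big1 ?coef0 // => j _.
  by rewrite nth_default // mul0r scale0r.
rewrite big_ord_recr /= big1 ?add0r; last first.
  move=> i _; rewrite coef_sum big1 // => j _.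
  rewrite coefZ coef_qsh_small ?mulr0 //.
  by rewrite -addSn leq_add // -ltnS (leq_trans (ltn_ord j)).
rewrite coef_sum.
rewrite (@sum_widen _ (size q) b.+1
  (fun j => ((p`_a * q`_j) *: qsh_mon F a j)`_(a + b))) //; last first.
  by move=> j hj _; rewrite (nth_default 0 hj) mulr0 scale0r coef0.
rewrite big_ord_recr /= big1 ?add0r; last first.
  move=> j _; rewrite coefZ coef_qsh_small ?mulr0 //.
  by rewrite -addnS leq_add2l.
by rewrite coefZ qsh_top.
Qed.

Lemma foldr_top ts :
  (forall i, (i < size ts)%N ->
     (Lambda F (nth nd ts i))`_(tr_size (nth nd ts i)) * (tfact (nth nd ts i))%:R
     = ((tr_size (nth nd ts i))`!)%:R) ->
  (foldr (@diamond F) 1 (map (Lambda F) ts))`_(sumn (map tr_size ts)) *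
     (foldr muln 1%N (map tfact ts))%:R = ((sumn (map tr_size ts))`!)%:R.
Proof.
elim: ts => [|t ts IH] H /=; first by rewrite coef1 mulr1.
have Ht := H 0%N isT; have Hts := IH (fun i hi => H i.+1 hi); rewrite /= in Ht.
rewrite diamond_top ?Lambda_size //; last first.
  by apply: size_foldr => i hi; exact: Lambda_size.
set A := (Lambda F t)`_(tr_size t) in Ht *.
set D := (foldr (@diamond F) 1 (map (Lambda F) ts))`_(sumn (map tr_size ts)) in Hts *.
rewrite natrM.
set u := (tfact t)%:R in Ht *; set v := (foldr muln 1%N (map tfact ts))%:R in Hts *.
have -> : A * D * ('C(tr_size t + sumn (map tr_size ts), tr_size t))%:R * (u * v)
   = (A * u) * (D * v) * ('C(tr_size t + sumn (map tr_size ts), tr_size t))%:R.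
  by rewrite mulrAC -!mulrA; congr (_ * _); rewrite mulrCA; congr (_ * _); rewrite mulrCA.
rewrite Ht Hts -!natrM; congr (_%:R).
by rewrite mulnC -[in RHS](bin_fact (leq_addr (sumn (map tr_size ts)) (tr_size t))) addKn.
Qed.

Lemma top_coef t : (Lambda F t)`_(tr_size t) * (tfact t)%:R = ((tr_size t)`!)%:R.
Proof.
elim/tree_ind2: t => ts IH.
rewrite LambdaE tr_sizeE coefMX /= natrM mulrCA foldr_top // factS natrM.
by [].
Qed.

Lemma tfact_gt0 t : (0 < tfact t)%N.
Proof.
elim/tree_ind2: t => ts IH /=; rewrite muln_gt0 /=.
elim: ts IH => [|t ts IH'] H //=; rewrite muln_gt0 (H 0%N isT) /=.
by apply: IH' => i hi; apply: (H i.+1).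
Qed.

Lemma part2 (hF : [pchar F] =i pred0) t :
  Ccoef F 0 t = ((tr_size t)`!)%:R / (tfact t)%:R.
Proof.
have hu : (tfact t)%:R != 0 :> F.
  by move/pcharf0P: hF => ->; rewrite -lt0n tfact_gt0.
rewrite -top_coef mulfK // /Ccoef subn0.
by clear hu; case: t.
Qed.

Definition vn n m (r : {ffun 'I_n -> 'I_m}) : {ffun 'I_n -> nat} := [ffun i => val (r i)].

Lemma sum_ffun_widen n m0 m' (P : pred {ffun 'I_n -> nat}) (G : {ffun 'I_n -> nat} -> F) :
  (m0.+1 <= m')%N -> (forall f, P f -> forall i, (f i < m0.+1)%N) ->
  \sum_(r : {ffun 'I_n -> 'I_m0.+1} | P (vn r)) G (vn r) =
  \sum_(r : {ffun 'I_n -> 'I_m'} | P (vn r)) G (vn r).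
Proof.
move=> le HP.
pose h (r : {ffun 'I_n -> 'I_m0.+1}) : {ffun 'I_n -> 'I_m'} := [ffun i => widen_ord le (r i)].
pose h' (r : {ffun 'I_n -> 'I_m'}) : {ffun 'I_n -> 'I_m0.+1} := [ffun i => inord (r i)].
have vnh r : vn (h r) = vn r by apply/ffunP => i; rewrite !ffunE.
symmetry; rewrite (reindex_onto h h') /=.
  apply: eq_big => r; last by move=> _; rewrite vnh.
  rewrite vnh; case: (P (vn r)) => //=; apply/eqP/ffunP => i; rewrite !ffunE.
  by apply: val_inj; rewrite /= inordK.
move=> r' Pr; apply/ffunP => i; rewrite !ffunE; apply: val_inj => /=; rewrite inordK //.
by have := HP _ Pr i; rewrite ffunE.
Qed.

Lemma part1 ts s :
     Ccoef F s (Node ts) =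
     \sum_(j < s.+1)
       \sum_(r : {ffun 'I_(size ts) -> 'I_(s - j).+1}
               | (\sum_(i < size ts) (r i : nat))%N == (s - j)%N)
         (qsh (map (fun i : 'I_(size ts) => (tr_size (nth (Node [::]) ts i) - r i)%N) (enum 'I_(size ts))) j)%:R
         * \prod_(i < size ts) Ccoef F (r i) (nth (Node [::]) ts i).
Proof.
set n := size ts; set K := sumn (map tr_size ts).
pose B := (s + K).+1.
pose kf (f : {ffun 'I_n -> nat}) := map (fun i : 'I_n => (tr_size (nth nd ts i) - f i)%N) (enum 'I_n).
pose Pc (f : {ffun 'I_n -> nat}) := \prod_(i < n) Ccoef F (f i) (nth nd ts i).
pose Sf (f : {ffun 'I_n -> nat}) := (\sum_(i < n) f i)%N.
pose Z f := if (Sf f <= s)%N then (qsh (kf f) (s - Sf f))%:R * Pc f else 0.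
have Sf_ge (f : {ffun 'I_n -> nat}) (i : 'I_n) : (f i <= Sf f)%N by rewrite /Sf (bigD1 i) //= leq_addr.
have Pc_bad (f : {ffun 'I_n -> nat}) (i : 'I_n) : (tr_size (nth nd ts i) <= f i)%N -> Pc f = 0.
  by move=> H; rewrite /Pc (bigD1 i) //= /Ccoef ltnNge H mul0r.
have KE : K = (\sum_(i < n) tr_size (nth nd ts i))%N.
  by rewrite /K sumnE big_map (big_nth nd) big_mkord.
have sumn_kf (f : {ffun 'I_n -> nat}) : (forall i : 'I_n, f i <= tr_size (nth nd ts i))%N -> sumn (kf f) = (K - Sf f)%N.
  move=> H; rewrite sumnE /kf big_map big_enum /= sumnB => [|i _]; last exact: H.
  rewrite KE /Sf; congr (_ - _)%N; apply: eq_bigl => i; by rewrite inE.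
have goodP (f : {ffun 'I_n -> nat}) :
    (exists2 i : 'I_n, (tr_size (nth nd ts i) <= f i)%N & Pc f = 0) \/
    ((forall i : 'I_n, (f i < tr_size (nth nd ts i))%N) /\ (Sf f <= K)%N).
  case: (boolP [exists i : 'I_n, (tr_size (nth nd ts i) <= f i)%N]) => [/existsP [i hi] | Hn].
    by left; exists i => //; exact: Pc_bad hi.
  have Hlt : forall i : 'I_n, (f i < tr_size (nth nd ts i))%N.
    move=> i; rewrite ltnNge; apply/negP => h; move/negP: Hn; apply; by apply/existsP; exists i.
  right; split => //; rewrite KE /Sf; apply: leq_sum => i _; exact: ltnW.
have Zs (f : {ffun 'I_n -> nat}) : (K < s)%N -> Z f = 0.
  move=> hs; rewrite /Z; case: ifP => // hf.
  case: (goodP f) => [[i _ ->] | [Hlt SK]]; first by rewrite mulr0.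
  rewrite qshE (_ : (s - Sf f <= sumn (kf f))%N = false) ?mul0r //.
  by rewrite sumn_kf => [|i]; [rewrite ar1 | exact: ltnW].
have Zk (f : {ffun 'I_n -> nat}) : (s <= K)%N -> Pc f * (#|Surj (kf f) (K - s)|)%:R = Z f.
  move=> hs; rewrite /Z.
  case: (goodP f) => [[i _ ->] | [Hlt SK]]; first by rewrite mul0r; case: ifP; rewrite ?mulr0.
  have sk := sumn_kf f (fun i => ltnW (Hlt i)).
  case: ifP => hf.
    rewrite qshE (_ : (s - Sf f <= sumn (kf f))%N = true); last by rewrite sk ar2.
    have -> : (sumn (kf f) - (s - Sf f) = K - s)%N by rewrite sk ar3.
    by rewrite mulrC.
  by rewrite card_Surj_big ?mulr0 // sk ar4 // ltnNge hf.
transitivity (\sum_(r : {ffun 'I_n -> 'I_B}) Z (vn r)).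
  rewrite /Ccoef tr_sizeE LambdaE -/K ltnS.
  case: (leqP s K) => hs; last by rewrite big1 // => r _; exact: Zs.
  rewrite subSn // coefMX /= (@D_expand ts B); last first.
    by move=> i hi; rewrite /B; apply: leqW; exact: (leq_trans (nth_size_le hi) (leq_addl _ _)).
  rewrite coef_sum; apply: eq_bigr => r _; rewrite coefZ Pm_coef -Zk //.
  congr (_ * _).
    by apply: eq_bigr => i _; rewrite ffunE.
  by rewrite /kr /kf; congr (#|Surj _ _|)%:R; apply: eq_map => i; rewrite ffunE.
symmetry.
transitivity (\sum_(j < s.+1) \sum_(r : {ffun 'I_n -> 'I_B} | (fun f => Sf f == s - j)%N (vn r))
                 (fun f => (qsh (kf f) j)%:R * Pc f) (vn r)).
  apply: eq_bigr => j _.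
  transitivity (\sum_(r : {ffun 'I_n -> 'I_(s - j).+1} | (fun f => Sf f == s - j)%N (vn r))
                 (fun f => (qsh (kf f) j)%:R * Pc f) (vn r)).
    apply: eq_big => r.
      by rewrite /= /Sf; congr (_ == _); apply: eq_bigr => i _; rewrite ffunE.
    move=> _; rewrite /= /kf /Pc; congr (_ * _).
      by congr ((qsh _ _)%:R); apply: eq_map => i; rewrite ffunE.
    by apply: eq_bigr => i _; rewrite ffunE.
  apply: (@sum_ffun_widen n (s - j) B (fun f => Sf f == s - j)%N (fun f => (qsh (kf f) j)%:R * Pc f)).
    by rewrite /B ltnS (leq_trans (leq_subr j s) (leq_addr K s)).
  by move=> f /eqP hf i; rewrite ltnS -hf; exact: Sf_ge.
rewrite (exchange_big_dep xpredT) //=; apply: eq_bigr => r _.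
rewrite /Z; case: leqP => h.
  rewrite (big_pred1 (inord (s - Sf (vn r)) : 'I_s.+1)) /=; last first.
    move=> j /=; rewrite -val_eqE /= inordK ?ltnS ?leq_subr //.
    by apply: ar5; rewrite // -ltnS.
  by rewrite inordK // ltnS leq_subr.
rewrite big_pred0 // => j /=; apply: ar6 => //; by rewrite -ltnS.
Qed.
End Trees.

Unset Implicit Arguments.

Theorem mainTheorem19 (F : fieldType) (hF : [pchar F] =i pred0) :
  (forall (ts : seq tree) (s : nat),
     Ccoef F s (Node ts) =
     \sum_(j < s.+1)
       \sum_(r : {ffun 'I_(size ts) -> 'I_(s - j).+1}
               | (\sum_(i < size ts) (r i : nat))%N == (s - j)%N)
         (qsh (map (fun i : 'I_(size ts) => (tr_size (nth (Node [::]) ts i) - r i)%N) (enum 'I_(size ts))) j)%:R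
         * \prod_(i < size ts) Ccoef F (r i) (nth (Node [::]) ts i))
  /\ (forall t : tree, Ccoef F 0 t = (tr_size t)`!%:R / (tfact t)%:R)
  /\ (forall (ks : seq nat) (s : nat), all (fun k => 0 < k)%N ks ->
        Ccoef F s (Node (map ladder ks)) = (qsh ks s)%:R).
Proof.
split; first exact: part1.
split; first exact: part2.
exact: part3.
Qed.
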